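(* Let $L=\langle S,A,\to\rangle$ be a labelled transition system. For all $x,y\in\{o,b\}$, the relation $\equiv^{ed}_{E(x,y)}$ is an $(x,y)$-generic bisimulation.
   Context: An LTS is $\langle S,A,\to\rangle$ with states $S$, actions $A$ containing the internal action $\tau$, and $\to\subseteq S\times A\times S$; write $s\xrightarrow{a}t$, and $\twoheadrightarrow$ for the reflexive-transitive closure of $\xrightarrow{\tau}$. For $R\subseteq S\times S$ and $s,s',t$: $s\twoheadrightarrow_{o,R,t}s'$ iff $s\twoheadrightarrow s'$; $s\twoheadrightarrow_{b,R,t}s'$ iff $s\twoheadrightarrow s'$, $t\,R\,s$ and $t\,R\,s'$. For $x,y\in\{o,b\}$, a symmetric $R$ is an $(x,y)$-generic bisimulation if whenever $s\,R\,t$ and $s\xrightarrow{a}s'$, either $a=\tau$ and $s'\,R\,t$, or there exist $t',t_1,t_2$ with $t\twoheadrightarrow_{x,R,s}t_1\xrightarrow{a}t_2\twoheadrightarrow_{y,R,s'}t'$ and $s'\,R\,t'$. Game with explicit divergence. Let $\frown,\smile$ be formal tags and $E\subseteq\{\frown,\smile\}$. Spoiler-owned configurations $\langle (s,t),c,m,r\rangle_S$ and Duplicator-owned $\langle (s,t),c,m,r\rangle_D$ have $(s,t)\in S\times S$, $c\in (A\times S)\cup\{\dagger\}$, $m\in (S\times\{\frown,\smile\})\cup\{\dagger\}$, $r\in\{*,\checkmark\}$. From $\langle (s,t),c,m,r\rangle_S$ Spoiler may: (S1) move to $\langle (s,t),c,m,*\rangle_D$ if $c\neq\dagger$; (S2a)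 for some $s\xrightarrow{a}s'$, move to $\langle (s,t),(a,s'),(t,\frown),*\rangle_D$ if $c=\dagger$; (S2b) for some $s\xrightarrow{a}s'$, move to $\langle (s,t),(a,s'),(t,\frown),\checkmark\rangle_D$ if $c\neq (a,s')$; (S3) for some $t\xrightarrow{a}t'$, move to $\langle (t,s),(a,t'),(s,\frown),\checkmark\rangle_D$. From $\langle (u,v),(a,u'),(\bar v,f),r\rangle_D$ Duplicator may: (D1) move to $\langle (u',\bar v),\dagger,\dagger,*\rangle_S$ if $a=\tau$; (D2) if $f=\frown$ and $\bar v\xrightarrow{a}v'$: (a) move to $\langle (u',v'),(a,u'),(v',\smile),*\rangle_S$, or (b) move to $\langle (u',v'),\dagger,\dagger,\checkmark\rangle_S$, or (c) only if $\smile\in E$, move to $\langle (u,v),(a,u'),(v',\smile),*\rangle_S$; (D3) for some $\bar v\xrightarrow{\tau}v'$: (a) move to $\langle (u,v'),(a,u'),(v',f),*\rangle_S$, or (b) only if $f=\smile$, move to $\langle (u',v'),\dagger,\dagger,\checkmark\rangle_S$, or (c) only if $f\in E$, move to $\langle (u,v),(a,u'),(v',f),*\rangle_S$. Duplicator wins a finite play if Spoiler gets stuck, and an infinite play if it has infinitely many $\checkmark$ rewards; other plays are won by Spoiler. $s\equiv^{ed}_E t$ iff Duplicator has a strategy winning all plays from $\langle (s,t),\dagger,\dagger,*\rangle_S$. $E(x,y)$ is the smallest set with $\frown\in E(o,y)$ and $\smile\in E(x,o)$ for all $x,y\in\{o,b\}$. *)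

(* Defs.v *)
From Stdlib Require Import List.
Import ListNotations.
Set Implicit Arguments.

Record LTS := mkLTS {
  St : Type;
  Act : Type;
  tau : Act;
  trans : St -> Act -> St -> Prop
}.

Section Defs.
Variable L : LTS.
Notation S := (St L).
Notation A := (Act L).
Notation step := (trans L).

Inductive tau_star : S -> S -> Prop :=
| ts_refl s : tau_star s s
| ts_step s s1 s' : step s (tau L) s1 -> tau_star s1 s' -> tau_star s s'.

Inductive mode := o | b.

Definition tau_rel (x : mode) (R : S -> S -> Prop) (t s s' : S) : Prop :=
  match x with
  | o => tau_star s s'
  | b => tau_star s s' /\ R t s /\ R t s'
  end.

Definition symmetric (R : S -> S -> Prop) : Prop := forall s t, R s t -> R t s.

Definition generic_bisim (x y : mode) (R : S -> S -> Prop) : Prop :=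
  symmetric R /\
  forall s t a s', R s t -> step s a s' ->
    (a = tau L /\ R s' t) \/
    (exists t' t1 t2, tau_rel x R s t t1 /\ step t1 a t2 /\ tau_rel y R s' t2 t' /\ R s' t').

Inductive tag := frown | smile.
Inductive player := Spoiler | Duplicator.

(** configuration <(s,t), c, m, r>_owner ; [None] stands for the dagger,
    [rr = true] for the reward checkmark, [rr = false] for * *)
Record conf := mkConf {
  owner : player;
  pos : S * S;
  cc : option (A * S);
  mm : option (S * tag);
  rr : bool
}.

Section Game.
Variable E : tag -> Prop.

Inductive move : conf -> conf -> Prop :=
| S1 s t c m r :
    c <> None ->
    move (mkConf Spoiler (s, t) c m r) (mkConf Duplicator (s, t) c m false)
| S2a s t m r a s' :
    step s a s' ->
    move (mkConf Spoiler (s, t) None m r)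
         (mkConf Duplicator (s, t) (Some (a, s')) (Some (t, frown)) false)
| S2b s t c m r a s' :
    step s a s' -> c <> Some (a, s') ->
    move (mkConf Spoiler (s, t) c m r)
         (mkConf Duplicator (s, t) (Some (a, s')) (Some (t, frown)) true)
| S3 s t c m r a t' :
    step t a t' ->
    move (mkConf Spoiler (s, t) c m r)
         (mkConf Duplicator (t, s) (Some (a, t')) (Some (s, frown)) true)
| D1 u v a u' vb f r :
    a = tau L ->
    move (mkConf Duplicator (u, v) (Some (a, u')) (Some (vb, f)) r)
         (mkConf Spoiler (u', vb) None None false)
| D2a u v a u' vb r v' :
    step vb a v' ->
    move (mkConf Duplicator (u, v) (Some (a, u')) (Some (vb, frown)) r)
         (mkConf Spoiler (u', v') (Some (a, u')) (Some (v', smile)) false)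
| D2b u v a u' vb r v' :
    step vb a v' ->
    move (mkConf Duplicator (u, v) (Some (a, u')) (Some (vb, frown)) r)
         (mkConf Spoiler (u', v') None None true)
| D2c u v a u' vb r v' :
    step vb a v' -> E smile ->
    move (mkConf Duplicator (u, v) (Some (a, u')) (Some (vb, frown)) r)
         (mkConf Spoiler (u, v) (Some (a, u')) (Some (v', smile)) false)
| D3a u v a u' vb f r v' :
    step vb (tau L) v' ->
    move (mkConf Duplicator (u, v) (Some (a, u')) (Some (vb, f)) r)
         (mkConf Spoiler (u, v') (Some (a, u')) (Some (v', f)) false)
| D3b u v a u' vb r v' :
    step vb (tau L) v' ->
    move (mkConf Duplicator (u, v) (Some (a, u')) (Some (vb, smile)) r)
         (mkConf Spoiler (u', v') None None true)
| D3c u v a u' vb f r v' :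
    step vb (tau L) v' -> E f ->
    move (mkConf Duplicator (u, v) (Some (a, u')) (Some (vb, f)) r)
         (mkConf Spoiler (u, v) (Some (a, u')) (Some (v', f)) false).

(** A (history-dependent) Duplicator strategy maps a finite play (as a list,
    most recent configuration first) to the configuration it moves to.  If the
    proposed configuration is not a legal move, Duplicator is stuck. *)
Definition dstrategy := list conf -> conf.

Definition cons_step (sigma : dstrategy) (h : list conf) (c' : conf) : Prop :=
  match h with
  | [] => False
  | cur :: _ =>
      match owner cur with
      | Spoiler => move cur c'
      | Duplicator => c' = sigma h /\ move cur c'
      end
  end.

Inductive reach (sigma : dstrategy) (init : conf) : list conf -> Prop :=
| reach_init : reach sigma init [init]
| reach_step h c' : reach sigma init h -> cons_step sigma h c' -> reach sigma init (c' :: h).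

Fixpoint hist (p : nat -> conf) (n : nat) : list conf :=
  match n with
  | 0 => [p 0]
  | Datatypes.S k => p (Datatypes.S k) :: hist p k
  end.

Definition inf_play (sigma : dstrategy) (init : conf) (p : nat -> conf) : Prop :=
  p 0 = init /\ forall n, cons_step sigma (hist p n) (p (Datatypes.S n)).

Definition dwinning (sigma : dstrategy) (init : conf) : Prop :=
  (forall h cur rest, reach sigma init h -> h = cur :: rest ->
     (forall c', ~ cons_step sigma h c') -> owner cur = Spoiler) /\
  (forall p, inf_play sigma init p ->
     forall N, exists n, N <= n /\ rr (p n) = true).

Definition equiv_ed (s t : S) : Prop :=
  exists sigma, dwinning sigma (mkConf Spoiler (s, t) None None false).

End Game.

Definition Exy (x y : mode) (f : tag) : Prop :=
  match f with
  | frown => x = o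
  | smile => y = o
  end.

End Defs.

(* Main.v *)
Require Import Defs.
From Stdlib Require Import List Classical FunctionalExtensionality ClassicalEpsilon.
Import ListNotations.
Set Implicit Arguments.

Section G.
Variable L : LTS.
Variable E : tag -> Prop.
Notation conf := (conf L).
Notation mv := (move E).
Implicit Types (sigma sg : dstrategy L) (c d cur : conf) (h rest : list conf).

Definition won (c : conf) := exists sigma, dwinning E sigma c.

Lemma move_r o p oc m r r' c2 :
  mv (mkConf L o p oc m r) c2 -> mv (mkConf L o p oc m r') c2.
Proof.
  intro H; inversion H; subst;
  [eapply S1|eapply S2a|eapply S2b|eapply S3|eapply D1|eapply D2a|eapply D2b
  |eapply D2c|eapply D3a|eapply D3b|eapply D3c]; eauto.
Qed.

Lemma reach_app sigma c h : reach E sigma c h -> exists h', h = h' ++ [c].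
Proof.
  induction 1 as [|h c' _ [h' ->] _].
  - exists []; reflexivity.
  - exists (c' :: h'); reflexivity.
Qed.

Lemma reach_last sigma c h d : reach E sigma c h -> last h d = c.
Proof. intro H; destruct (reach_app H) as [h' ->]; apply last_last. Qed.

Lemma reach_ne sigma c h : reach E sigma c h -> h <> [].
Proof. intro H; destruct (reach_app H) as [h' ->]; destruct h'; discriminate. Qed.

Definition pstrat (c d0 : conf) (f : conf -> dstrategy L) : dstrategy L :=
  fun h => match h with
           | [] => d0
           | [_] => d0
           | _ :: _ :: _ => f (last (removelast h) c) (removelast h)
           end.

Lemma pstrat_app c d0 f h1 : h1 <> [] ->
  pstrat c d0 f (h1 ++ [c]) = f (last h1 c) h1.
Proof.
  intro Hne. destruct h1 as [|z h1]; [congruence|].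
  assert (Hform : pstrat c d0 f ((z :: h1) ++ [c]) =
    f (last (removelast ((z::h1)++[c])) c) (removelast ((z::h1)++[c]))).
  { destruct h1; reflexivity. }
  rewrite Hform, removelast_last. reflexivity.
Qed.

Lemma cons_step_pstrat c d0 f h1 x : h1 <> [] ->
  cons_step E (pstrat c d0 f) (h1 ++ [c]) x <-> cons_step E (f (last h1 c)) h1 x.
Proof.
  intro Hne. pose proof (@pstrat_app c d0 f h1 Hne) as Hp.
  destruct h1 as [|z h1]; [congruence|]. unfold cons_step. cbn [app] in *.
  rewrite Hp. tauto.
Qed.

Lemma hist_shift (p : nat -> conf) n :
  hist p (S n) = hist (fun k => p (S k)) n ++ [p 0].
Proof.
  induction n; [reflexivity|].
  change (hist p (S (S n))) with (p (S (S n)) :: hist p (S n)).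
  rewrite IHn. reflexivity.
Qed.

Lemma hist_ne (p : nat -> conf) n : hist p n <> [].
Proof. destruct n; discriminate. Qed.

Lemma hist_last (p : nat -> conf) n d : last (hist p n) d = p 0.
Proof.
  induction n; [reflexivity|].
  change (hist p (S n)) with (p (S n) :: hist p n).
  destruct n; [reflexivity|]. exact IHn.
Qed.

Lemma hd_hist (p : nat -> conf) n : exists rest, hist p n = p n :: rest.
Proof. destruct n; eexists; reflexivity. Qed.

Lemma prefix_win c d0 f :
  (owner c = Spoiler -> forall c1, mv c c1 -> dwinning E (f c1) c1) ->
  (owner c = Duplicator -> mv c d0 /\ dwinning E (f d0) d0) ->
  dwinning E (pstrat c d0 f) c.
Proof.
  intros HS HD.
  assert (Hdw : forall c1, mv c c1 -> (owner c = Duplicator -> c1 = d0) -> dwinning E (f c1) c1).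
  { intros c1 Hm Hd. destruct (owner c) eqn:Ho.
    - apply HS; auto.
    - rewrite (Hd eq_refl). apply HD; auto. }
  assert (Hstr : forall h, reach E (pstrat c d0 f) c h -> h = [c] \/
     exists c1 h1, h = h1 ++ [c] /\ mv c c1 /\ reach E (f c1) c1 h1 /\
                   (owner c = Duplicator -> c1 = d0)).
  { induction 1 as [|h c' Hr IH Hc].
    - left; reflexivity.
    - right. destruct IH as [->|[c1 [h1 [-> [Hm [Hr1 Hd]]]]]].
      + exists c', [c']. unfold cons_step in Hc. simpl in Hc.
        destruct (owner c) eqn:Ho.
        * split; [reflexivity|]. split; [exact Hc|]. split; [constructor|discriminate].
        * destruct Hc as [Heq Hm]. split; [reflexivity|]. split; [exact Hm|].
          split; [constructor|auto].
      + exists c1, (c' :: h1). split; [reflexivity|]. split; [exact Hm|].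
        split; [|exact Hd]. constructor; [exact Hr1|].
        apply (@cons_step_pstrat c d0 f _ _ (reach_ne Hr1)) in Hc.
        rewrite (reach_last _ Hr1) in Hc. exact Hc. }
  split.
  - intros h cur rest Hr Heq Hst.
    destruct (Hstr h Hr) as [->|[c1 [h1 [-> [Hm [Hr1 Hd]]]]]].
    + inversion Heq; subst cur rest. destruct (owner c) eqn:Ho; [reflexivity|].
      exfalso. destruct (HD eq_refl) as [Hm _]. apply (Hst d0).
      unfold cons_step; rewrite Ho. split; [reflexivity|exact Hm].
    + destruct (Hdw c1 Hm Hd) as [W1 _].
      destruct h1 as [|z h1]; [destruct (reach_ne Hr1 eq_refl)|].
      simpl in Heq. inversion Heq; subst z.
      apply (W1 (cur :: h1) cur h1 Hr1 eq_refl).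
      intros c' Hc. apply (Hst c').
      apply (@cons_step_pstrat c d0 f _ _ (reach_ne Hr1)).
      rewrite (reach_last _ Hr1). exact Hc.
  - intros p [H0 Hp] N.
    assert (Hm1 : mv c (p 1) /\ (owner c = Duplicator -> p 1 = d0)).
    { specialize (Hp 0). simpl in Hp. rewrite H0 in Hp. unfold cons_step in Hp.
      destruct (owner c) eqn:Ho.
      - split; [exact Hp|discriminate].
      - destruct Hp as [He Hm]. split; [exact Hm|auto]. }
    destruct Hm1 as [Hm Hd].
    destruct (Hdw (p 1) Hm Hd) as [_ W2].
    destruct (W2 (fun k => p (S k))) with (N := N) as [n [Hn Hrr]].
    + split; [reflexivity|]. intro n.
      specialize (Hp (S n)). rewrite hist_shift, H0 in Hp.
      apply (@cons_step_pstrat c d0 f _ _ (hist_ne _ n)) in Hp.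
      rewrite hist_last in Hp. exact Hp.
    + exists (S n). split; [auto|exact Hrr].
Qed.

Lemma restart1 sigma c0 c1 : dwinning E sigma c0 -> cons_step E sigma [c0] c1 ->
  dwinning E (fun h => sigma (h ++ [c0])) c1.
Proof.
  intros [W1 W2] Hc.
  assert (Hr : forall h, reach E (fun h => sigma (h ++ [c0])) c1 h -> reach E sigma c0 (h ++ [c0])).
  { induction 1 as [|h c' Hr IH Hc'].
    - simpl. econstructor; [constructor|exact Hc].
    - econstructor; [exact IH|]. destruct h as [|z h]; [destruct (reach_ne Hr eq_refl)|].
      exact Hc'. }
  split.
  - intros h cur rest Hh Heq Hst. destruct h as [|z h]; [discriminate|].
    inversion Heq; subst z rest.
    apply (W1 _ cur (h ++ [c0]) (Hr _ Hh) eq_refl).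
    intros c' Hc'. apply (Hst c'). exact Hc'.
  - intros p' [H0 Hp] N.
    set (p := fun n => match n with 0 => c0 | S k => p' k end).
    destruct (W2 p) with (N := S N) as [n [Hn Hrr]].
    + split; [reflexivity|]. intros [|n].
      * simpl. rewrite <- H0 in Hc. exact Hc.
      * rewrite hist_shift. simpl (p 0). specialize (Hp n).
        destruct n; exact Hp.
    + destruct n as [|n]; [inversion Hn|]. exists n. split; [auto with arith|exact Hrr].
Qed.

Lemma restart sigma c0 h : dwinning E sigma c0 -> reach E sigma c0 h ->
  forall cur rest, h = cur :: rest -> dwinning E (fun h' => sigma (h' ++ rest)) cur.
Proof.
  intros W. induction 1 as [|h c' Hr IH Hc]; intros cur rest Heq.
  - inversion Heq; subst.
    replace (fun h' => sigma (h' ++ [])) with sigma; [exact W|].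
    extensionality h'. rewrite app_nil_r. reflexivity.
  - inversion Heq; subst cur rest.
    destruct h as [|z h]; [destruct (reach_ne Hr eq_refl)|].
    specialize (IH z h eq_refl).
    pose proof (@restart1 _ _ c' IH Hc) as R.
    replace (fun h' => sigma (h' ++ z :: h)) with (fun h0 => sigma ((h0 ++ [z]) ++ h)); [exact R|].
    extensionality h'. rewrite <- app_assoc. reflexivity.
Qed.

Lemma reach_won sigma c0 h cur rest : dwinning E sigma c0 -> reach E sigma c0 h ->
  h = cur :: rest -> won cur.
Proof. intros W Hr Heq. eexists. exact (restart W Hr Heq). Qed.

Lemma won_S c : owner c = Spoiler -> (forall c1, mv c c1 -> won c1) -> won c.
Proof.
  intros Ho H.
  assert (Hf : forall c1, {sigma | mv c c1 -> dwinning E sigma c1}).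
  { intro c1. apply constructive_indefinite_description.
    destruct (classic (mv c c1)) as [Hm|Hm].
    - destruct (H c1 Hm) as [sg Hs]. exists sg; auto.
    - exists (fun _ => c1). intro; contradiction. }
  exists (pstrat c c (fun c1 => proj1_sig (Hf c1))). apply prefix_win.
  - intros _ c1 Hm. exact (proj2_sig (Hf c1) Hm).
  - rewrite Ho; discriminate.
Qed.

Lemma won_D c c1 : owner c = Duplicator -> mv c c1 -> won c1 -> won c.
Proof.
  intros Ho Hm [sg Hs]. exists (pstrat c c1 (fun _ => sg)). apply prefix_win.
  - rewrite Ho; discriminate.
  - auto.
Qed.

Lemma won_inv_S c c1 : won c -> owner c = Spoiler -> mv c c1 -> won c1.
Proof.
  intros [sg W] Ho Hm. eexists. apply (@restart1 _ _ _ W). unfold cons_step. rewrite Ho. exact Hm.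
Qed.

Lemma won_inv_D c : won c -> owner c = Duplicator -> exists c1, mv c c1 /\ won c1.
Proof.
  intros [sg W] Ho. assert (Hm : mv c (sg [c])).
  { apply NNPP. intro Hn. destruct W as [W1 _].
    assert (owner c = Spoiler).
    { apply (W1 [c] c [] (reach_init _ _ _) eq_refl).
      intros c' Hc. unfold cons_step in Hc. rewrite Ho in Hc. destruct Hc as [-> Hc]. auto. }
    congruence. }
  exists (sg [c]). split; [exact Hm|]. eexists. apply (@restart1 _ _ _ W).
  unfold cons_step. rewrite Ho. auto.
Qed.

Lemma won_r o p oc m r r' : won (mkConf L o p oc m r) -> won (mkConf L o p oc m r').
Proof.
  intro W. destruct o.
  - apply won_S; [reflexivity|]. intros c1 Hm. apply (won_inv_S W eq_refl).
    eapply move_r; exact Hm.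
  - destruct (won_inv_D W eq_refl) as [c1 [Hm W1]].
    apply (won_D (c1 := c1)); [reflexivity| |exact W1]. eapply move_r; exact Hm.
Qed.


Definition S1succ c : conf := mkConf L Duplicator (pos c) (cc c) (mm c) false.

Inductive DP : conf -> Prop :=
| DP_done d c1 : mv d c1 -> cc c1 = None -> won c1 -> DP d
| DP_cont d c1 : mv d c1 -> cc c1 <> None -> won c1 -> DP (S1succ c1) -> DP d.

Definition nxt sigma d h : conf :=
  match h with
  | [] => d
  | cur :: _ => match owner cur with Spoiler => S1succ cur | Duplicator => sigma h end
  end.

Fixpoint hp sigma d n : list conf :=
  match n with 0 => [d] | S k => nxt sigma d (hp sigma d k) :: hp sigma d k end.

Definition pp sigma d n : conf := hd d (hp sigma d n).

Lemma hist_pp sigma d n : hist (pp sigma d) n = hp sigma d n.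
Proof. induction n; [reflexivity|]. simpl. rewrite IHn. reflexivity. Qed.

Lemma hp_cons sigma d n : exists tl, hp sigma d n = pp sigma d n :: tl.
Proof. destruct n; eexists; reflexivity. Qed.

Lemma move_D_facts d c1 : mv d c1 -> owner d = Duplicator ->
  owner c1 = Spoiler /\ (cc c1 <> None -> rr c1 = false).
Proof. intros H Ho; inversion H; subst; simpl in *; try discriminate; split; auto;
  intro Hn; exfalso; apply Hn; reflexivity. Qed.

Lemma pp_S sg d n : pp sg d (S n) =
  match owner (pp sg d n) with Spoiler => S1succ (pp sg d n) | Duplicator => sg (hp sg d n) end.
Proof.
  destruct (hp_cons sg d n) as [tl Htl].
  change (pp sg d (S n)) with (nxt sg d (hp sg d n)). rewrite Htl. reflexivity.
Qed.

Lemma cons_step_hp sg d n c' : cons_step E sg (hp sg d n) c' <->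
  match owner (pp sg d n) with Spoiler => mv (pp sg d n) c'
  | Duplicator => c' = sg (hp sg d n) /\ mv (pp sg d n) c' end.
Proof.
  destruct (hp_cons sg d n) as [tl Htl]. rewrite Htl. tauto.
Qed.

Lemma S1_move c : owner c = Spoiler -> cc c <> None -> mv c (S1succ c).
Proof.
  destruct c as [o0 [s0 t0] c0 m0 r0]; simpl; intros -> Hc. apply S1; exact Hc.
Qed.

Lemma won_DP d : won d -> owner d = Duplicator -> DP d.
Proof.
  intros [sg W] Ho. apply NNPP. intro HnD.
  set (Inv := fun n => reach E sg d (hp sg d n) /\ (1 <= n -> rr (pp sg d n) = false) /\
      match owner (pp sg d n) with
      | Duplicator => ~ DP (pp sg d n)
      | Spoiler => cc (pp sg d n) <> None /\ ~ DP (S1succ (pp sg d n))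
      end).
  assert (Hstep : forall n, Inv n -> cons_step E sg (hp sg d n) (pp sg d (S n)) /\ Inv (S n)).
  { intros n [Hr [Hrr Hm]].
    assert (Hcs : cons_step E sg (hp sg d n) (pp sg d (S n))).
    { apply cons_step_hp. rewrite pp_S. destruct (owner (pp sg d n)) eqn:Ho'.
      - apply S1_move; [exact Ho'|apply Hm].
      - split; [reflexivity|]. apply NNPP. intro Hn.
        destruct (hp_cons sg d n) as [tl Htl]. destruct W as [W1 _].
        assert (owner (pp sg d n) = Spoiler).
        { apply (W1 _ _ tl Hr Htl). intros c' Hc'. apply cons_step_hp in Hc'.
          rewrite Ho' in Hc'. destruct Hc' as [-> Hc']. auto. }
        congruence. }
    split; [exact Hcs|].
    assert (Hr' : reach E sg d (hp sg d (S n))) by (econstructor; eauto).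
    split; [exact Hr'|].
    pose proof Hcs as Hcs'. apply cons_step_hp in Hcs'.
    destruct (owner (pp sg d n)) eqn:Ho'.
    - rewrite pp_S, Ho'. split; [reflexivity|]. simpl. apply Hm.
    - destruct Hcs' as [_ Hmv].
      assert (Hw : won (pp sg d (S n))).
      { destruct (hp_cons sg d (S n)) as [tl Htl]. exact (reach_won W Hr' Htl). }
      destruct (move_D_facts Hmv Ho') as [Hs Hrr'].
      assert (Hcc : cc (pp sg d (S n)) <> None).
      { intro Hn. apply Hm. eapply DP_done; eauto. }
      split; [auto|]. rewrite Hs. split; [exact Hcc|].
      intro HD. apply Hm. eapply DP_cont; eauto. }
  assert (HI : forall n, Inv n).
  { induction n.
    - unfold Inv. split; [constructor|]. split; [intro H; inversion H|]. change (pp sg d 0) with d. rewrite Ho. exact HnD.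
    - apply Hstep; auto. }
  destruct W as [_ W2].
  destruct (W2 (pp sg d)) with (N := 1) as [n [Hn Hrr]].
  - split; [reflexivity|]. intro n. rewrite hist_pp. apply Hstep, HI.
  - destruct (HI n) as [_ [Hf _]]. rewrite Hf in Hrr; auto. discriminate.
Qed.


Lemma conf_eta c : mkConf L (owner c) (pos c) (cc c) (mm c) (rr c) = c.
Proof. destruct c; reflexivity. Qed.

Lemma won_S_sim c c' : owner c' = Spoiler -> won c -> owner c = Spoiler ->
  (forall c1, mv c' c1 -> exists r', mv c (mkConf L (owner c1) (pos c1) (cc c1) (mm c1) r')) ->
  won c'.
Proof.
  intros Ho' W Ho H. apply won_S; [exact Ho'|]. intros c1 Hm.
  destruct (H c1 Hm) as [r' Hm']. pose proof (won_inv_S W Ho Hm') as W'.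
  rewrite <- conf_eta. eapply won_r; exact W'.
Qed.

Lemma app3 s v a s' r :
  won (mkConf L Spoiler (s, v) (Some (a, s')) (Some (v, frown)) r) ->
  won (mkConf L Spoiler (s, v) None None false).
Proof.
  intro W. eapply won_S_sim; [reflexivity|exact W|reflexivity|].
  intros c1 Hm. inversion Hm; subst; simpl.
  - congruence.
  - destruct (classic ((a0, s'0) = (a, s'))) as [He|Hne].
    + rewrite He. exists false. apply S1. discriminate.
    + exists true. apply S2b; [assumption|]. congruence.
  - destruct (classic ((a0, s'0) = (a, s'))) as [He|Hne].
    + rewrite He. exists false. apply S1. discriminate.
    + exists true. apply S2b; [assumption|]. congruence.
  - exists true. apply S3. assumption.
Qed.


Lemma smile_D (HE : ~ E smile) u a : trans L u a u -> forall v,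
  won (mkConf L Duplicator (u, v) (Some (a, u)) (Some (v, smile)) false) ->
  won (mkConf L Duplicator (u, v) (Some (a, u)) (Some (v, frown)) false).
Proof.
  intros Hu v W. pose proof (won_DP W eq_refl) as HD.
  assert (G : forall d, DP d -> forall v, d = mkConf L Duplicator (u, v) (Some (a, u)) (Some (v, smile)) false ->
     won (mkConf L Duplicator (u, v) (Some (a, u)) (Some (v, frown)) false)).
  2: { exact (G _ HD v eq_refl). }
  clear v W HD.
  induction 1 as [d c1 Hm Hc W1 | d c1 Hm Hc W1 HD IH]; intros v0 ->; inversion Hm; subst.
  - eapply won_D; [reflexivity| |exact W1]. apply D1. reflexivity.
  - discriminate.
  - eapply won_D; [reflexivity|apply D3a; eassumption|].
    apply won_S; [reflexivity|]. intros c2 Hm2. inversion Hm2; subst.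
    + eapply won_inv_S; [exact W1|reflexivity|]. apply S2a. exact Hu.
    + eapply won_inv_S; [exact W1|reflexivity|]. apply S2b; [assumption|discriminate].
    + eapply won_inv_S; [exact W1|reflexivity|]. apply S3. assumption.
  - contradiction.
  - simpl in Hc. congruence.
  - specialize (IH v' eq_refl).
    eapply won_D; [reflexivity|apply D3a; eassumption|].
    apply won_S; [reflexivity|]. intros c2 Hm2. inversion Hm2; subst.
    + exact IH.
    + eapply won_inv_S; [exact W1|reflexivity|]. apply S2b; [assumption|congruence].
    + eapply won_inv_S; [exact W1|reflexivity|]. apply S3. assumption.
  - simpl in Hc. congruence.
  - contradiction.
Qed.

Lemma smile_init (HE : ~ E smile) u v a :
  won (mkConf L Spoiler (u, v) (Some (a, u)) (Some (v, smile)) false) ->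
  won (mkConf L Spoiler (u, v) None None false).
Proof.
  intro W. apply won_S; [reflexivity|]. intros c1 Hm. inversion Hm; subst.
  - congruence.
  - destruct (classic ((a0, s') = (a, u))) as [He|Hne].
    + injection He as -> ->. apply smile_D; auto.
      eapply won_inv_S; [exact W|reflexivity|]. apply S1. discriminate.
    + eapply won_r. eapply won_inv_S; [exact W|reflexivity|]. apply S2b; [eassumption|congruence].
  - destruct (classic ((a0, s') = (a, u))) as [He|Hne].
    + injection He as -> ->. eapply won_r. apply smile_D; auto.
      eapply won_inv_S; [exact W|reflexivity|]. apply S1. discriminate.
    + eapply won_inv_S; [exact W|reflexivity|]. apply S2b; [eassumption|congruence].
  - eapply won_inv_S; [exact W|reflexivity|]. apply S3. assumption.
Qed.


Lemma won_sym s t : won (mkConf L Spoiler (s, t) None None false) ->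
  won (mkConf L Spoiler (t, s) None None false).
Proof.
  intro W. eapply won_S_sim; [reflexivity|exact W|reflexivity|].
  intros c1 Hm. inversion Hm; subst; simpl.
  - congruence.
  - exists true. apply S3. assumption.
  - exists true. apply S3. assumption.
  - exists true. apply S2b; [assumption|discriminate].
Qed.

Lemma tau_star_snoc s u v : tau_star L s u -> trans L u (tau L) v -> tau_star L s v.
Proof.
  induction 1; intro Hl.
  - eapply ts_step; [exact Hl|constructor].
  - eapply ts_step; [eassumption|auto].
Qed.

Notation R := (equiv_ed L E).

Definition Goal x y s t a s' :=
  (a = tau L /\ R s' t) \/
  (exists t' t1 t2, tau_rel L x R s t t1 /\ trans L t1 a t2 /\ tau_rel L y R s' t2 t' /\ R s' t').

Lemma tau_rel_end y s' t2 t' : tau_star L t2 t' -> (y = b -> R s' t2) -> R s' t' ->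
  tau_rel L y R s' t2 t'.
Proof. destruct y; simpl; auto. Qed.

Lemma phase2 x y s t a s' t1 t2 : tau_rel L x R s t t1 -> trans L t1 a t2 ->
  (y = b -> R s' t2) ->
  forall d, DP d -> forall p w vb r,
  d = mkConf L Duplicator (p, w) (Some (a, s')) (Some (vb, smile)) r ->
  tau_star L t2 vb -> Goal x y s t a s'.
Proof.
  intros H1 H2 Hy.
  induction 1 as [d c1 Hm Hc W1 | d c1 Hm Hc W1 HD IH]; intros p w vb r -> Hts;
    inversion Hm; subst; simpl in Hc; try congruence.
  - right. exists vb, t1, t2. split; [exact H1|]. split; [exact H2|].
    split; [apply tau_rel_end; auto|exact W1].
  - right. exists v', t1, t2. split; [exact H1|]. split; [exact H2|].
    assert (Wv : R s' v') by (eapply won_r; exact W1).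
    split; [apply tau_rel_end; auto; eapply tau_star_snoc; eauto|exact Wv].
  - eapply IH; [reflexivity|]. eapply tau_star_snoc; eauto.
  - eapply IH; [reflexivity|]. eapply tau_star_snoc; eauto.
Qed.

Lemma phase1 x y (HEf : E frown -> x = o) (HEs : E smile -> y = o) s t a s' :
  R s t -> trans L s a s' ->
  forall d, DP d -> forall w vb r,
  d = mkConf L Duplicator (s, w) (Some (a, s')) (Some (vb, frown)) r ->
  tau_rel L x R s t vb ->
  (vb = t \/ exists t0, tau_rel L x R s t t0 /\ trans L t0 (tau L) vb) ->
  Goal x y s t a s'.
Proof.
  intros Rst Hs.
  induction 1 as [d c1 Hm Hc W1 | d c1 Hm Hc W1 HD IH]; intros w vb r -> Hv Hv2;
    inversion Hm; subst; simpl in Hc; try congruence.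
  - destruct Hv2 as [->|[t0 [Ht0 Hst]]].
    + left. split; [reflexivity|exact W1].
    + right. exists vb, t0, vb. split; [exact Ht0|]. split; [exact Hst|].
      split; [apply tau_rel_end; auto; constructor|exact W1].
  - right. exists v', vb, v'.
    assert (Wv : R s' v') by (eapply won_r; exact W1).
    split; [exact Hv|]. split; [assumption|].
    split; [apply tau_rel_end; auto; constructor|exact Wv].
  - refine (@phase2 x y s t a s' vb v' Hv _ _ _ HD _ _ _ _ eq_refl (ts_refl _ _)); [assumption|].
    intro Hyb. refine (@smile_init _ s' v' a W1).
    intro He. apply HEs in He. congruence.
  - refine (@phase2 x y s t a s' vb v' Hv _ _ _ HD _ _ _ _ eq_refl (ts_refl _ _)); [assumption|].
    intro Hyb. match goal with Hh : E smile |- _ => apply HEs in Hh end. congruence.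
  - eapply IH; [reflexivity| |].
    + destruct x; simpl in *.
      * eapply tau_star_snoc; eauto.
      * destruct Hv as [Hv [_ _]]. split; [eapply tau_star_snoc; eauto|].
        split; [exact Rst|]. eapply app3. exact W1.
    + right. exists vb. split; auto.
  - assert (x = o) by auto. subst x. eapply IH; [reflexivity| |].
    + simpl in *. eapply tau_star_snoc; eauto.
    + right. exists vb. split; auto.
Qed.

End G.

Theorem lemma6p8 (L : LTS) (x y : mode) :
  generic_bisim L x y (equiv_ed L (Exy x y)).
Proof.
  split.
  - intros s t H. exact (won_sym H).
  - intros s t a s' H Hs.
    assert (W0 : won (Exy x y) (mkConf L Duplicator (s, t) (Some (a, s')) (Some (t, frown)) false)).
    { eapply won_inv_S; [exact H|reflexivity|]. apply S2a. exact Hs. }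
    eapply (phase1 (x := x) (y := y)); [auto|auto|exact H|exact Hs|
      exact (won_DP W0 eq_refl)|reflexivity| |left; reflexivity].
    destruct x; simpl; [constructor|]. split; [constructor|]. auto.
Qed.
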